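(* Let $\mathcal P$ be a CPOS $2n$-gon. The following are equivalent: (i) all vertices $D(i+\tfrac12)$, $1\le i\le n$, of the central symmetry set of $\mathcal P$ coincide (the central symmetry set reduces to a point); (ii) all vertices $M_i$, $1\le i\le n$, of the area evolute of $\mathcal P$ coincide (the area evolute reduces to a point); (iii) $\mathcal P$ is symmetric with respect to some point $O$, i.e. $P_{i+n}-O=O-P_i$ for all $1\le i\le n$.
   Context: A CPOS (convex, parallel opposite sides) $2n$-gon ($n\ge2$) is a closed planar polygon $\mathcal P$ with vertices $P_1,\dots,P_{2n}$ (indices taken modulo $2n$) which bounds a convex region, has no two adjacent sides parallel, has parallel opposite sides ($P_{i+n+1}-P_{i+n}$ is parallel to $P_{i+1}-P_i$ for all $i$), and is positively oriented: $[P_{i+1}-P_i,P_{j+1}-P_j]>0$ for $1\le i<j\le n$, where $[a,b]$ is the determinant of $a,b\in\mathbb R^2$. The great diagonal $d_i$ is the line through $P_i$ and $P_{i+n}$, and $D(i+\tfrac12)$ is the intersection point of $d_i$ and $d_{i+1}$. The central symmetry set is the closed polygon with vertices $D(1+\tfrac12),\dots,D(n+\tfrac12)$. $M_i=\tfrac12(P_i+P_{i+n})$, and the area evolute is the closed polygon with vertices $M_1,\dots,M_n$. *)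

(* Defs.v *)
From HB Require Import structures.
From mathcomp Require Import all_boot all_order all_algebra.
Set Implicit Arguments. Unset Strict Implicit. Unset Printing Implicit Defensive.
Import Order.TTheory GRing.Theory Num.Theory.
Local Open Scope ring_scope.

Section Defs.
Variable R : realFieldType.

Definition det (a b : R * R) : R := a.1 * b.2 - a.2 * b.1.
Definition vsub (a b : R * R) : R * R := (a.1 - b.1, a.2 - b.2).

(* vertices P_0, ..., P_{2n-1}; indices taken modulo 2n
   (0-based relabelling of the paper's P_1, ..., P_{2n}) *)
Definition vtx (n : nat) (P : nat -> R * R) (k : nat) : R * R := P (k %% (2 * n))%N.
Definition edge (n : nat) (P : nat -> R * R) (i : nat) : R * R :=
  vsub (vtx n P i.+1) (vtx n P i).

Definition CPOS (n : nat) (P : nat -> R * R) : Prop :=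
  [/\ (2 <= n)%N,
      (* bounds a convex region: every vertex lies in the closed half-plane
         to the left of every (oriented) side *)
      (forall i k : nat, 0 <= det (edge n P i) (vsub (vtx n P k) (vtx n P i))),
      (forall i : nat, det (edge n P i) (edge n P i.+1) != 0),
      (forall i : nat, det (edge n P (i + n)) (edge n P i) = 0) &
      (* positively oriented *)
      (forall i j : nat, (i < j)%N -> (j < n)%N -> 0 < det (edge n P i) (edge n P j))].

Definition lineInter (A B C D : R * R) : R * R :=
  let u := vsub B A in
  let w := vsub D C in
  let t := det (vsub C A) w / det u w in
  (A.1 + t * u.1, A.2 + t * u.2).

Definition Dhalf (n : nat) (P : nat -> R * R) (i : nat) : R * R :=
  lineInter (vtx n P i) (vtx n P (i + n)) (vtx n P i.+1) (vtx n P (i.+1 + n)).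

Definition Mid (n : nat) (P : nat -> R * R) (i : nat) : R * R :=
  (((vtx n P i).1 + (vtx n P (i + n)).1) / 2,
   ((vtx n P i).2 + (vtx n P (i + n)).2) / 2).

End Defs.

(* Main.v *)
Require Import Defs.
From HB Require Import structures.
From mathcomp Require Import all_boot all_order all_algebra.
From mathcomp Require Import ring lra zify.
Import Order.TTheory GRing.Theory Num.Theory.
Local Open Scope ring_scope.
Set Implicit Arguments. Unset Strict Implicit.

Lemma par (R : realFieldType) (x y z : R * R) :
  det x z != 0 -> det x y = 0 -> exists mu, y = (mu * x.1, mu * x.2).
Proof.
case: x y z => [x1 x2] [y1 y2] [z1 z2]; rewrite /det /= => hz hy.
have [h1|h1] := eqVneq x1 0.
  have h2 : x2 != 0.
    by apply/eqP => h2; move: hz; rewrite h1 h2 !mul0r subrr eqxx.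
  exists (y2 / x2); congr pair; last by field.
  move: hy; rewrite h1 mul0r sub0r => /eqP; rewrite oppr_eq0 mulf_eq0 (negbTE h2) /=.
  by move/eqP ->; rewrite mulr0.
exists (y1 / x1); congr pair; first by field.
have : y2 = x2 * y1 / x1 by apply: (mulIf h1); rewrite mulfVK //; lra.
by move->; field.
Qed.

Lemma detvtx2 (R : realFieldType) n (P : nat -> R * R) x k :
  det x (vsub (vtx n P k.+2) (vtx n P k)) = det x (edge n P k) + det x (edge n P k.+1).
Proof. rewrite /det /edge /vsub /=; ring. Qed.

Lemma detsc (R : realFieldType) (mu : R) x v :
  det (mu * x.1, mu * x.2) v = mu * det x v.
Proof. rewrite /det /=; ring. Qed.

Lemma Lalg (R : realFieldType) (a1 a2 u1 u2 b1 b2 w1 w2 t s : R) :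
  a1 + t * u1 = b1 + s * w1 -> a2 + t * u2 = b2 + s * w2 -> u1 * w2 - u2 * w1 != 0 ->
  ((b1 + w1) - (a1 + u1)) * (b2 - a2) - ((b2 + w2) - (a2 + u2)) * (b1 - a1) = 0 ->
  s = t.
Proof.
move=> h1 h2 hD h.
have hb1 : b1 = a1 + t * u1 - s * w1 by rewrite h1; ring.
have hb2 : b2 = a2 + t * u2 - s * w2 by rewrite h2; ring.
rewrite hb1 hb2 in h.
have : (s - t) * (u1 * w2 - u2 * w1) = 0 by rewrite -h; ring.
by move/eqP; rewrite mulf_eq0 (negbTE hD) orbF subr_eq0 => /eqP.
Qed.

Lemma Lpt (R : realFieldType) (a c b d : R * R) t s :
  (a.1 + t * (vsub c a).1, a.2 + t * (vsub c a).2) =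
  (b.1 + s * (vsub d b).1, b.2 + s * (vsub d b).2) ->
  det (vsub d c) (vsub b a) = 0 -> det (vsub c a) (vsub d b) != 0 -> s = t.
Proof.
case: a c b d => [a1 a2] [c1 c2] [b1 b2] [d1 d2]; rewrite /det /vsub /= => [[h1 h2]] hp hD.
apply: (Lalg h1 h2 hD); rewrite -hp; ring.
Qed.

Lemma Lsym (R : realFieldType) (a b c d O : R * R) :
  vsub c O = vsub O a -> vsub d O = vsub O b -> det (vsub c a) (vsub d b) != 0 ->
  (a.1 + det (vsub b a) (vsub d b) / det (vsub c a) (vsub d b) * (vsub c a).1,
   a.2 + det (vsub b a) (vsub d b) / det (vsub c a) (vsub d b) * (vsub c a).2) = O.
Proof.
case: a b c d O => [a1 a2] [b1 b2] [c1 c2] [d1 d2] [o1 o2].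
rewrite /vsub /det /= => hc hd hD; case: hc => hc1 hc2; case: hd => hd1 hd2.
have e1 : c1 = 2 * o1 - a1 by lra.
have e2 : c2 = 2 * o2 - a2 by lra.
have e3 : d1 = 2 * o1 - b1 by lra.
have e4 : d2 = 2 * o2 - b2 by lra.
rewrite e1 e2 e3 e4 in hD *.
have hD' : (o1 - a1) * (b2 - a2) - (o2 - a2) * (b1 - a1) != 0.
  apply/eqP => h; move/eqP: hD; apply.
  have -> : (2 * o1 - a1 - a1) * (2 * o2 - b2 - b2) - (2 * o2 - a2 - a2) * (2 * o1 - b1 - b1)
    = - 4 * ((o1 - a1) * (b2 - a2) - (o2 - a2) * (b1 - a1)) by ring.
  by rewrite h mulr0.
by congr pair; field.
Qed.

Lemma Lmid (R : realFieldType) (a c O : R * R) :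
  vsub c O = vsub O a <-> (((a.1 + c.1) / 2, (a.2 + c.2) / 2) = O).
Proof.
case: a c O => [a1 a2] [c1 c2] [o1 o2]; rewrite /vsub /=; split.
  by case=> h1 h2; congr pair; lra.
by case=> h1 h2; congr pair; lra.
Qed.

Lemma flip (R : realFieldType) (x y O : R * R) :
  vsub x O = vsub O y -> vsub y O = vsub O x.
Proof.
case: x y O => [x1 x2] [y1 y2] [o1 o2]; rewrite /vsub /=.
by case=> h1 h2; congr pair; lra.
Qed.

Section S.
Variables (R : realFieldType) (n : nat) (P : nat -> R * R).
Hypothesis hP : CPOS n P.
Local Notation e := (edge n P).
Local Notation v := (vtx n P).

Lemma F1 k : 0 < det (e k) (e k.+1).
Proof.
case: hP => _ conv adj _ _.
have := conv k k.+2; rewrite detvtx2.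
have -> : det (e k) (e k) = 0 by rewrite /det; ring.
by rewrite add0r le_eqVlt eq_sym (negbTE (adj k)).
Qed.

Lemma F2 i : (i < n)%N -> exists2 mu : R, mu < 0 & e (i + n) = (mu * (e i).1, mu * (e i).2).
Proof.
case: hP => n2 conv adj paral orient.
have parl j : exists mu, e (j + n) = (mu * (e j).1, mu * (e j).2).
  apply: (par (adj j)); move: (paral j); rewrite /det => h; lra.
elim: i => [|i IH] hi.
  have [mu hmu] := parl 0%N; exists mu => //.
  have h1 := F1 n.-1; rewrite prednK ?(ltn_trans _ n2) // (_ : e n = e (0 + n)) // hmu in h1.
  have h2 := orient 0%N n.-1 ltac:(lia) ltac:(lia).
  move: h1; have -> : det (e n.-1) (mu * (e 0%N).1, mu * (e 0%N).2) = - mu * det (e 0%N) (e n.-1).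
    by rewrite /det /=; ring.
  by rewrite mulNr oppr_gt0 (pmulr_llt0 _ h2).
have [lam hlam hl] := IH (ltnW hi).
have [mu hmu] := parl i.+1; exists mu => //.
have h1 := F1 (i + n); rewrite -addSn hl hmu in h1.
have h2 := F1 i.
move: h1; have -> : det (lam * (e i).1, lam * (e i).2) (mu * (e i.+1).1, mu * (e i.+1).2)
   = lam * mu * det (e i) (e i.+1) by rewrite /det /=; ring.
by rewrite (pmulr_lgt0 _ h2) (nmulr_rgt0 _ hlam).
Qed.

Lemma F3A i : (i < n)%N -> 0 < det (e i) (vsub (v (i + n)) (v i)).
Proof.
move=> hi; case: (hP) => _ conv _ _ _.
have := conv i (i + n); rewrite le_eqVlt => /orP[/eqP h0|//].
have [mu hmu hl] := F2 hi.
have h1 := conv (i + n)%N i.+2.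
have h3 : det (e i) (vsub (v i.+2) (v (i + n))) =
   det (e i) (e i.+1) - det (e i) (vsub (v (i + n)) (v i)).
  by rewrite /det /edge /vsub /=; ring.
rewrite hl detsc h3 -h0 subr0 (pmulr_lge0 _ (F1 i)) in h1.
by move: hmu; rewrite ltNge h1.
Qed.

Lemma F3B i : (i < n)%N -> 0 < det (e (i + n)) (vsub (v i) (v (i + n))).
Proof.
move=> hi; case: (hP) => _ conv _ _ _.
have := conv (i + n)%N i; rewrite le_eqVlt => /orP[/eqP h0|//].
have [mu hmu hl] := F2 hi.
have h1 := conv i (i + n).+2.
have h3 : det (e (i + n)) (vsub (v (i + n).+2) (v i)) =
   det (e (i + n)) (e (i + n).+1) - det (e (i + n)) (vsub (v i) (v (i + n))).
  by rewrite /det /edge /vsub /=; ring.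
rewrite -h0 subr0 in h3.
have h4 := F1 (i + n); rewrite -h3 hl detsc (nmulr_rgt0 _ hmu) in h4.
by move: h1; rewrite leNgt h4.
Qed.

Lemma F4 i : (i < n)%N ->
  0 < det (vsub (v (i + n)) (v i)) (vsub (v (i.+1 + n)) (v i.+1)).
Proof.
move=> hi.
have -> : det (vsub (v (i + n)) (v i)) (vsub (v (i.+1 + n)) (v i.+1)) =
  det (e i) (vsub (v (i + n)) (v i)) + det (e (i + n)) (vsub (v i) (v (i + n))).
  by rewrite addSn /det /edge /vsub /=; ring.
by rewrite addr_gt0 ?F3A ?F3B.
Qed.

Definition T i := det (vsub (v i.+1) (v i)) (vsub (v (i.+1 + n)) (v i.+1)) /
   det (vsub (v (i + n)) (v i)) (vsub (v (i.+1 + n)) (v i.+1)).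

Lemma DhE i : Dhalf n P i = ((v i).1 + T i * (vsub (v (i + n)) (v i)).1,
                              (v i).2 + T i * (vsub (v (i + n)) (v i)).2).
Proof. by []. Qed.

Lemma vnn : v (n + n) = v 0%N.
Proof. by rewrite /vtx addnn -mul2n modnn mod0n. Qed.

Lemma half_step x y (t : R) : 1 - t = t -> x - (y + t * (x - y)) = y + t * (x - y) - y.
Proof.
move=> ht; rewrite (_ : x - (y + t * (x - y)) = (1 - t) * (x - y)); last by ring.
by rewrite ht; ring.
Qed.

Lemma D_sym : (forall i j : nat, (i < n)%N -> (j < n)%N -> Dhalf n P i = Dhalf n P j) ->
  exists O : R * R, forall i : nat, (i < n)%N -> vsub (v (i + n)) O = vsub O (v i).
Proof.
move=> hD; case: (hP) => n2 conv adj paral orient.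
have n1 : (0 < n)%N by lia.
have hT : forall i, (i < n)%N -> T i = T 0%N.
  elim=> [//|i IH] hi; rewrite -IH; last by lia.
  apply: (@Lpt R (v i) (v (i + n)) (v i.+1) (v (i.+1 + n))).
  - by rewrite -!DhE; apply: hD => //; lia.
  - by have := paral i; rewrite /edge -addSn.
  - by rewrite gt_eqF // F4 //; lia.
set t := T 0%N.
have ht : 1 - t = t.
  have hm : n = n.-1.+1 by lia.
  have hm' : (n.-1 < n)%N by lia.
  apply: (@Lpt R (v n.-1) (v (n.-1 + n)) (v n.-1.+1) (v (n.-1.+1 + n))).
  - have := hD 0%N n.-1 n1 hm'; rewrite !DhE (hT _ hm') -/t => <-.
    rewrite -hm vnn add0n /vsub /=; congr pair; ring.
  - by have := paral n.-1; rewrite /edge -addSn.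
  - by rewrite gt_eqF // F4.
exists (Dhalf n P 0%N) => i hi.
rewrite (hD 0%N i n1 hi) DhE (hT _ hi) -/t /vsub /=.
by congr pair; apply: half_step.
Qed.

Lemma sym_D O : (forall i : nat, (i < n)%N -> vsub (v (i + n)) O = vsub O (v i)) ->
  forall i, (i < n)%N -> Dhalf n P i = O.
Proof.
move=> hs i hi; case: (hP) => n2 _ _ _ _.
rewrite DhE /T; apply: Lsym.
- exact: hs.
- have [hi1|hi1] := ltnP i.+1 n; first exact: hs.
  have -> : i.+1 = n by lia.
  by rewrite vnn; apply: flip; have := hs 0%N ltac:(lia); rewrite add0n.
- by rewrite gt_eqF // F4.
Qed.

Lemma sym_Mid O : (forall i : nat, (i < n)%N -> vsub (v (i + n)) O = vsub O (v i)) ->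
  forall i, (i < n)%N -> Mid n P i = O.
Proof. by move=> hs i hi; apply/Lmid/hs. Qed.

Lemma Mid_sym : (forall i j : nat, (i < n)%N -> (j < n)%N -> Mid n P i = Mid n P j) ->
  exists O : R * R, forall i : nat, (i < n)%N -> vsub (v (i + n)) O = vsub O (v i).
Proof.
move=> hM; case: (hP) => n2 _ _ _ _.
exists (Mid n P 0%N) => i hi; apply/Lmid; rewrite (hM 0%N i) //; lia.
Qed.

End S.

Theorem mainTheorem1 (R : realFieldType) (n : nat) (P : nat -> R * R)
  (hP : CPOS n P) :
  [<-> (forall i j : nat, (i < n)%N -> (j < n)%N -> Dhalf n P i = Dhalf n P j);
       (forall i j : nat, (i < n)%N -> (j < n)%N -> Mid n P i = Mid n P j);
       (exists O : R * R, forall i : nat, (i < n)%N ->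
            vsub (vtx n P (i + n)) O = vsub O (vtx n P i))].
Proof.
tfae.
- move=> hD; have [O hO] := D_sym hP hD.
  by move=> i j hi hj; rewrite !(sym_Mid hO).
- exact: Mid_sym.
- case=> O hO i j hi hj; by rewrite !(sym_D hP hO).
Qed.
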